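(* Let $\beta^*_{\mathrm{CW}}(p)=\sup\{\beta\ge0:\sup_{t\in[0,1]}(\beta t^p-I(t))=0\}$ for integers $p\ge2$. Then (1) $\lim_{p\to\infty}\beta^*_{\mathrm{CW}}(p)=\log2$; (2) the sequence $\{\beta^*_{\mathrm{CW}}(p)\}_{p\ge2}$ is strictly increasing; (3) $\beta^*_{\mathrm{CW}}(2)=1/2$.
   Context: $I(t)=\frac12[(1+t)\log(1+t)+(1-t)\log(1-t)]$ for $t\in[0,1]$ (with $0\log0=0$). *)

(* Defs.v *)
From HB Require Import structures.
From mathcomp Require Import all_boot all_order all_algebra.
From mathcomp Require Import all_classical all_reals all_analysis.
Set Implicit Arguments. Unset Strict Implicit. Unset Printing Implicit Defensive.
Import Order.TTheory GRing.Theory Num.Theory.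
Local Open Scope ring_scope.
Local Open Scope classical_set_scope.

Definition xlogx {R : realType} (x : R) : R := if x == 0 then 0 else x * ln x.

Definition Irate {R : realType} (t : R) : R :=
  2^-1 * (xlogx (1 + t) + xlogx (1 - t)).

Definition supF {R : realType} (p : nat) (beta : R) : R :=
  sup [set beta * t ^+ p - Irate t | t in `[0, 1]%classic].

Definition beta_star {R : realType} (p : nat) : R :=
  sup [set beta : R | 0 <= beta /\ supF p beta = 0].

(* Main.v *)
Require Import Defs.
From HB Require Import structures.
From mathcomp Require Import all_boot all_order all_algebra.
From mathcomp Require Import all_classical all_reals all_analysis.
From mathcomp Require Import ring lra.
Import Order.TTheory GRing.Theory Num.Theory numFieldNormedType.Exports.
Local Open Scope ring_scope.
Local Open Scope classical_set_scope.
Section S.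
Variable R : realType.
Implicit Types x y t s u e : R.
Lemma dadd (c x : R) : is_derive x 1 (fun y : R => c + y) 1.
Proof.
have := is_deriveD (is_derive_cst c x 1) (is_derive_id x 1).
by rewrite add0r.
Qed.
Lemma dsub (c x : R) : is_derive x 1 (fun y : R => c - y) (-1).
Proof.
have := is_deriveB (is_derive_cst c x 1) (is_derive_id x 1).
by rewrite sub0r.
Qed.
Lemma d1p x : -1 < x -> is_derive x 1 (fun y : R => ln (1 + y)) (1 + x)^-1.
Proof.
move=> hx.
have h1 : 0 < 1 + x by rewrite -ltrBlDl sub0r.
have := @is_derive1_comp R (@ln R) (fun y => 1 + y) x _ _ (is_derive1_ln h1) (dadd 1 x).
by rewrite mulr1.
Qed.
Lemma d1m x : x < 1 -> is_derive x 1 (fun y : R => ln (1 - y)) (- (1 - x)^-1).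
Proof.
move=> hx.
have h1 : 0 < 1 - x by rewrite subr_gt0.
have := @is_derive1_comp R (@ln R) (fun y => 1 - y) x _ _ (is_derive1_ln h1) (dsub 1 x).
by rewrite mulrN1.
Qed.
Lemma mvt_ge (f df : R -> R) a b : a <= b ->
  (forall x, a <= x <= b -> is_derive x 1 f (df x)) ->
  (forall x, a <= x <= b -> 0 <= df x) -> f a <= f b.
Proof.
move=> ab hd hp.
have := @MVT_segment R f df a b ab.
case.
- move=> x; rewrite in_itv /= => /andP[h1 h2]; apply: hd; rewrite !ltW //.
- apply: derivable_within_continuous => x; rewrite in_itv /= => hx.
  by have := hd x hx => -[].
move=> c; rewrite in_itv /= => hc e.
rewrite -subr_ge0 e; apply: mulr_ge0; first exact: hp.
by rewrite subr_ge0.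
Qed.

Lemma k_ge0 x : 0 <= x < 1 -> 2 * x <= ln (1 + x) - ln (1 - x).
Proof.
move=> /andP[x0 x1].
rewrite -subr_ge0.
pose k := fun y : R => ln (1 + y) - ln (1 - y) - 2 * y.
have -> : ln (1 + x) - ln (1 - x) - 2 * x = k x - k 0.
  by rewrite /k /= !addr0 !subr0 ln1 mulr0 !subr0.
rewrite subr_ge0.
apply: (@mvt_ge k (fun y => (1 + y)^-1 - (- (1 - y)^-1) - 2)) => //.
- move=> y /andP[y0 y1].
  have hy1 : y < 1 by apply: le_lt_trans x1.
  have hy2 : -1 < y by apply: lt_le_trans y0; rewrite ltrN10.
  have := is_deriveB (is_deriveB (@d1p y hy2) (@d1m y hy1)) (is_deriveZ 2 (is_derive_id y 1)).
  move=> H; rewrite [2%:A]mulr1 in H; exact: H.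
- move=> y /andP[y0 y1].
  have hy1 : y < 1 by apply: le_lt_trans x1.
  have a1 : 1 - y <= (1 + y)^-1.
    rewrite -div1r ler_pdivlMr; last lra.
    nra.
  have a2 : 1 + y <= (1 - y)^-1.
    rewrite -div1r ler_pdivlMr; last lra.
    nra.
  rewrite opprK subr_ge0.
  apply: le_trans (lerD a1 a2); lra.
Qed.
Lemma phi_ge x : 0 <= x < 1 -> x ^+ 2 <= (1 + x) * ln (1 + x) + (1 - x) * ln (1 - x).
Proof.
move=> /andP[x0 x1].
rewrite -subr_ge0.
pose h := fun y : R => (1 + y) * ln (1 + y) + (1 - y) * ln (1 - y) - y * y.
have -> : (1 + x) * ln (1 + x) + (1 - x) * ln (1 - x) - x ^+ 2 = h x - h 0.
  by rewrite /h /= !addr0 !subr0 ln1 !mulr0 !(addr0, subr0) expr2.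
rewrite subr_ge0.
apply: (@mvt_ge h (fun y => ln (1 + y) - ln (1 - y) - 2 * y)) => //.
- move=> y /andP[y0 y1].
  have hy1 : y < 1 by apply: le_lt_trans x1.
  have hy2 : -1 < y by apply: lt_le_trans y0; rewrite ltrN10.
  have H := is_deriveB (is_deriveD (is_deriveM (dadd 1 y) (@d1p y hy2))
     (is_deriveM (dsub 1 y) (@d1m y hy1))) (is_deriveM (is_derive_id y 1) (is_derive_id y 1)).
  move: H. set D := (X in is_derive _ _ _ X) => H.
  suff -> : ln (1 + y) - ln (1 - y) - 2 * y = D by exact: H.
  have e1 : 1 + y != 0 by lra.
  have e2 : 1 - y != 0 by lra.
  rewrite /D -![_ *: _]/(_ * _) mulrN mulfV // mulfV //; lra.
- move=> y /andP[y0 y1]; rewrite subr_ge0; apply: k_ge0.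
  rewrite y0 /=; exact: le_lt_trans x1.
Qed.
Lemma Irate_lt1 t : 0 <= t < 1 ->
  Irate t = 2^-1 * ((1 + t) * ln (1 + t) + (1 - t) * ln (1 - t)).
Proof.
move=> /andP[t0 t1].
rewrite /Irate /xlogx (gt_eqF (_ : 0 < 1 + t)); last lra.
by rewrite (gt_eqF (_ : 0 < 1 - t)); last lra.
Qed.

Lemma Irate0 : Irate (0:R) = 0.
Proof. by rewrite Irate_lt1 ?lexx ?ltr01 // addr0 subr0 ln1 mulr0 addr0 mulr0. Qed.

Lemma Irate1 : Irate (1:R) = ln 2.
Proof.
rewrite /Irate /xlogx subrr eqxx addr0 (gt_eqF (_ : 0 < 1 + 1)); last lra.
by rewrite (_ : 1 + 1 = 2) //; lra.
Qed.

Lemma ln2_ge : 2^-1 <= ln (2:R).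
Proof.
have := @le_ln1Dx R (- 2^-1) ltac:(lra).
have -> : 1 - 2^-1 = (2:R)^-1 by lra.
rewrite lnV; last by rewrite posrE; lra.
lra.
Qed.

Lemma ln2_le : ln (2:R) <= 1.
Proof. by have := @le_ln1Dx R 1 ltac:(lra). Qed.

Lemma Irate_ge t : 0 <= t <= 1 -> t ^+ 2 / 2 <= Irate t.
Proof.
move=> /andP[t0 t1].
case: (ltrP t 1) => ht.
  rewrite Irate_lt1 ?t0 //.
  have H : 0 <= t < 1 by rewrite t0 ht.
  have := phi_ge t H; lra.
have -> : t = 1 by apply: le_anti; rewrite t1 ht.
rewrite Irate1 expr1n; have := ln2_ge; lra.
Qed.
Lemma ln_ge1 y : 0 < y -> 1 - y^-1 <= ln y.
Proof.
move=> y0.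
have iy : 0 < y^-1 by rewrite invr_gt0.
have h : -1 < y^-1 - 1 by lra.
have := le_ln1Dx h.
rewrite addrC subrK lnV ?posrE //; lra.
Qed.

Lemma Irate_up t : 0 <= t < 1 -> 2 * (1 - t) * Irate t <= t ^+ 2 * (1 + t).
Proof.
move=> /andP[t0 t1].
rewrite Irate_lt1 ?t0 ?t1 //.
have p1 : 0 < 1 + t by lra.
have p2 : 0 < 1 - t by lra.
have H1 : ln (1 + t) + ln (1 - t) <= - t ^+ 2.
  rewrite -lnM ?posrE //.
  have -> : (1 + t) * (1 - t) = 1 + (- t ^+ 2) by rewrite expr2; ring.
  apply: le_ln1Dx; nra.
have H2 : (1 - t) * (ln (1 + t) - ln (1 - t)) <= 2 * t.
  rewrite -ln_div ?posrE //.
  have -> : (1 + t) / (1 - t) = 1 + ((1 + t) / (1 - t) - 1) by ring.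
  have h3 : -1 < (1 + t) / (1 - t) - 1.
    have : 0 < (1 + t) / (1 - t) by rewrite divr_gt0.
    lra.
  have := le_ln1Dx h3.
  have -> : (1 + t) / (1 - t) - 1 = 2 * t / (1 - t).
    by field; lra.
  move=> h; have := ler_wpM2l (ltW p2) h.
  have -> : (1 - t) * (2 * t / (1 - t)) = 2 * t by field; lra.
  by [].
have E : 2 * (1 - t) * (2^-1 * ((1 + t) * ln (1 + t) + (1 - t) * ln (1 - t)))
   = (1 - t) * (ln (1 + t) + ln (1 - t)) + t * ((1 - t) * (ln (1 + t) - ln (1 - t))).
  by field.
rewrite E.
have := ler_wpM2l (ltW p2) H1.
have := ler_wpM2l t0 H2.
nra.
Qed.

Lemma Irate_near1_up s : 0 < s < 1 -> 2 * Irate (1 - s) <= (2 - s) * ln 2 + s * ln s.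
Proof.
move=> /andP[s0 s1].
rewrite Irate_lt1; last lra.
have -> : 1 - (1 - s) = s by ring.
have -> : 1 + (1 - s) = 2 - s by ring.
have : ln (2 - s) <= ln 2 by rewrite ler_ln ?posrE; lra.
move=> h; have := ler_wpM2l (_ : 0 <= 2 - s) h.
move=> /(_ ltac:(lra)).
lra.
Qed.

Lemma Irate_near1_lo e u : 0 < e <= 1 -> 0 <= u <= e ^+ 2 -> ln 2 - 2 * e <= Irate (1 - u).
Proof.
move=> /andP[e0 e1] /andP[u0 ue].
have l2 := ln2_le; have l2' := ln2_ge.
case: (eqVneq u 0) => [->|un0].
  rewrite subr0 Irate1; lra.
have upos : 0 < u by rewrite lt_def un0 u0.
case: (eqVneq u 1) => [eu|u1].
  rewrite eu subrr Irate0; rewrite eu in ue.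
  have : 1 <= e by rewrite expr2 in ue; nra.
  lra.
have ult1 : u < 1 by rewrite lt_def eq_sym u1 /=; rewrite expr2 in ue; nra.
rewrite Irate_lt1; last lra.
have -> : 1 - (1 - u) = u by ring.
have -> : 1 + (1 - u) = 2 - u by ring.
have A : (2 - u) * ln (2 - u) >= (2 - u) * ln 2 - u.
  have h := ln_ge1 ((2 - u) / 2) ltac:(lra).
  rewrite ln_div ?posrE in h; try lra.
  have := ler_wpM2l (_ : 0 <= 2 - u) h => /(_ ltac:(lra)).
  have -> : (2 - u) * (1 - ((2 - u) / 2)^-1) = - u by field; lra.
  lra.
pose r := Num.sqrt u.
have r0 : 0 < r by rewrite sqrtr_gt0.
have ru : r ^+ 2 = u by rewrite sqr_sqrtr.
have re : r <= e.
  by rewrite -(ler_pXn2r (_ : 0 < 2)%N) ?nnegrE ?(ltW r0) ?(ltW e0) // ru.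
have B : - 2 * r <= u * ln u.
  rewrite -ru lnXn // -mulr_natr.
  have := ln_ge1 r r0.
  have -> : 1 - r^-1 = (r - 1) / r by field; lra.
  move=> h; have := ler_wpM2l (_ : 0 <= 2 * r ^+ 2) h => /(_ ltac:(nra)).
  have -> : 2 * r ^+ 2 * ((r - 1) / r) = 2 * r * (r - 1) by field; lra.
  nra.
have ue' : u <= e by rewrite expr2 in ue; nra.
have : u * ln 2 <= u by nra.
lra.
Qed.
Definition Pp p (b : R) := forall t : R, 0 <= t <= 1 -> b * t ^+ p <= Irate t.

Lemma Irate_ge0 t : 0 <= t <= 1 -> 0 <= Irate t.
Proof. move=> h; apply: le_trans (Irate_ge t h); apply: divr_ge0 => //; exact: sqr_ge0. Qed.

Lemma supF_eq0 p b : (0 < p)%N -> supF p b = 0 <-> Pp p b.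
Proof.
move=> p0.
have m0 : [set b * t ^+ p - Irate t | t in `[0, 1]%classic] 0.
  exists 0; first by rewrite /= in_itv /= lexx ler01.
  by rewrite expr0n (negbTE (lt0n_neq0 p0)) mulr0 Irate0 subrr.
have ub : has_ubound [set b * t ^+ p - Irate t | t in `[0, 1]%classic].
  exists `|b| => _ [t /= + <-]; rewrite in_itv /= => ht.
  have := Irate_ge0 t ht.
  have : b * t ^+ p <= `|b|.
    apply: le_trans (ler_norm _) _; rewrite normrM normrX.
    have : `|t| ^+ p <= 1.
      case/andP: ht => t0 t1; rewrite ger0_norm //; exact: exprn_ile1.
    move=> h; rewrite -[leRHS]mulr1; apply: ler_wpM2l => //.
  lra.
split.
- move=> hs t ht.
  have H : [set b * t ^+ p - Irate t | t in `[0, 1]%classic] (b * t ^+ p - Irate t).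
    by exists t => //=; rewrite in_itv.
  have := ub_le_sup ub H.
  by rewrite /supF in hs; rewrite hs subr_le0.
- move=> hP; apply: le_anti; apply/andP; split.
    apply: ge_sup; first by exists 0.
    move=> _ [t /= + <-]; rewrite in_itv /= => ht.
    by rewrite subr_le0; apply: hP.
  exact: ub_le_sup ub _ m0.
Qed.
Lemma S_ne p : (0 < p)%N -> [set beta : R | 0 <= beta /\ supF p beta = 0] !=set0.
Proof.
move=> p0; exists 0; split => //; apply/(supF_eq0 _ _ p0) => t ht.
by rewrite mul0r; apply: Irate_ge0.
Qed.

Lemma bs_ub p t : (0 < p)%N -> 0 < t <= 1 -> beta_star p * t ^+ p <= Irate t.
Proof.
move=> p0 /andP[t0 t1].
have tp : 0 < t ^+ p by apply: exprn_gt0.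
rewrite -ler_pdivlMr //; apply: ge_sup; first exact: S_ne.
move=> b [b0 /(supF_eq0 _ _ p0) hb].
rewrite ler_pdivlMr //; apply: hb; rewrite t1 ltW //.
Qed.

Lemma bs_P p : (0 < p)%N -> Pp p (beta_star p).
Proof.
move=> p0 t /andP[t0 t1].
case: (eqVneq t 0) => [->|tn0].
  by rewrite expr0n (negbTE (lt0n_neq0 p0)) mulr0 Irate0.
apply: bs_ub => //; rewrite t1 andbT lt_def tn0 t0 //.
Qed.

Lemma bs_lb p b : (0 < p)%N -> 0 <= b -> Pp p b -> b <= beta_star p.
Proof.
move=> p0 b0 hb.
have ub : has_ubound [set beta : R | 0 <= beta /\ supF p beta = 0].
  exists (ln 2) => c [c0 /(supF_eq0 _ _ p0) hc].
  have := hc 1 ltac:(rewrite ler01 lexx //).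
  by rewrite expr1n mulr1 Irate1.
apply: ub_le_sup ub _ _; split => //; exact/(supF_eq0 _ _ p0).
Qed.

Lemma bs_le_ln2 p : (0 < p)%N -> @beta_star R p <= ln 2.
Proof.
move=> p0; have := @bs_ub p 1 p0 ltac:(rewrite ltr01 lexx //).
by rewrite expr1n mulr1 Irate1.
Qed.

Lemma bs_ge_half p : (2 <= p)%N -> 2^-1 <= @beta_star R p.
Proof.
move=> p2; have p0 : (0 < p)%N by apply: leq_trans p2.
apply: bs_lb => //.
move=> t /andP[t0 t1]; apply: le_trans (Irate_ge t ltac:(rewrite t0 t1 //)).
rewrite -(subnK p2) exprD mulrC -mulrA.
have : t ^+ (p - 2) <= 1 by apply: exprn_ile1.
have : 0 <= t ^+ (p - 2) by apply: exprn_ge0.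
have : 0 <= t ^+ 2 by apply: sqr_ge0.
nra.
Qed.
Lemma bs2 : @beta_star R 2 = 1 / 2.
Proof.
rewrite div1r; apply: le_anti; rewrite bs_ge_half // andbT.
set m := beta_star 2.
rewrite leNgt; apply/negP => hm.
pose t := (2 * m - 1) / (2 * (2 * m + 1)).
have dpos : 0 < 2 * (2 * m + 1) by lra.
have t0 : 0 < t by rewrite divr_gt0 //; lra.
have tt : t * (2 * (2 * m + 1)) = 2 * m - 1 by rewrite /t divfK //; lra.
have t1 : t < 1 by nra.
have A := @bs_ub 2 t isT ltac:(rewrite t0 ltW //).
have B := Irate_up t ltac:(rewrite ltW // t1).
have C : 2 * (1 - t) * (m * t ^+ 2) <= t ^+ 2 * (1 + t).
  apply: le_trans B; apply: ler_wpM2l => //; lra.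
have D : 2 * (1 - t) * m <= 1 + t.
  have t2 : 0 < t ^+ 2 by apply: exprn_gt0.
  rewrite -(ler_pM2r t2).
  have -> : 2 * (1 - t) * m * t ^+ 2 = 2 * (1 - t) * (m * t ^+ 2) by ring.
  by have -> : (1 + t) * t ^+ 2 = t ^+ 2 * (1 + t) by ring.
nra.
Qed.
Lemma bernoulli n s : 0 <= s <= 1 -> 1 - n%:R * s <= (1 - s) ^+ n.
Proof.
move=> /andP[s0 s1]; elim: n => [|n IH]; first by rewrite mul0r subr0 expr0.
rewrite exprS -natr1.
have : 0 <= 1 - s by lra.
have : 0 <= (n%:R : R) by [].
have : 0 <= (n%:R : R) * s ^+ 2 by apply: mulr_ge0 => //; apply: sqr_ge0.
nra.
Qed.

Lemma bs_lt_ln2 p : (0 < p)%N -> @beta_star R p < ln 2.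
Proof.
move=> p0.
set m := beta_star p.
set L := ln (2:R).
set P := (p%:R : R).
have P1 : 1 <= P by rewrite /P ler1n.
have L0 : 2^-1 <= L by apply: ln2_ge.
pose c := 2 * P * L + P.
pose s := expR (- c).
have s0 : 0 < s by apply: expR_gt0.
have s1 : s < 1 by rewrite /s expR_lt1 /c; nra.
have lns : ln s = - c by rewrite /s expRK.
have A := @bs_ub p (1 - s) p0 ltac:(apply/andP; split; lra).
have B := Irate_near1_up s ltac:(rewrite s0 s1 //).
have C := bernoulli p s ltac:(rewrite ltW // ltW //).
rewrite ltNge; apply/negP => hm.
have m0 : 0 <= m by apply: le_trans hm; lra.
have D : L * (1 - P * s) <= m * (1 - s) ^+ p.
  apply: le_trans (_ : L * (1 - s) ^+ p <= _).
    apply: ler_wpM2l => //; lra.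
  apply: ler_wpM2r => //; apply: exprn_ge0; lra.
rewrite lns /c -/L in B; rewrite -/m in A.
have : 2 * (L * (1 - P * s)) <= (2 - s) * L + s * - (2 * P * L + P) by lra.
nra.
Qed.
Lemma bs_incr p : (2 <= p)%N -> @beta_star R p < beta_star p.+1.
Proof.
move=> p2; have p0 : (0 < p)%N by apply: leq_trans p2.
have hl := bs_lt_ln2 p p0.
have hh := bs_ge_half p p2.
have l2 := ln2_le.
set m := beta_star p in hl hh *.
pose e := (ln 2 - m) / 4.
have e0 : 0 < e by rewrite /e; lra.
have e1 : e <= 1 by rewrite /e; lra.
pose b1 := m + e ^+ 2 / 2.
have e2 : 0 < e ^+ 2 by apply: exprn_gt0.
apply: lt_le_trans (_ : m < b1) _; first by rewrite /b1; lra.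
apply: bs_lb => //; first by rewrite /b1; lra.
move=> t /andP[t0 t1].
have tp : 0 <= t ^+ p by apply: exprn_ge0.
have tp1 : t ^+ p <= 1 by apply: exprn_ile1.
case: (lerP (1 - e ^+ 2) t) => ht.
  have := Irate_near1_lo e (1 - t) ltac:(rewrite e0 e1 //) ltac:(apply/andP; split; lra).
  rewrite (_ : 1 - (1 - t) = t); last ring.
  have : b1 * t ^+ p.+1 <= b1.
    rewrite -[leRHS]mulr1; apply: ler_wpM2l; first by rewrite /b1; lra.
    exact: exprn_ile1.
  rewrite /b1 /e in e2 *. rewrite expr2 in e2 *. nra.
have := bs_P p p0 t ltac:(rewrite t0 t1 //); rewrite -/m => hP.
apply: le_trans hP; rewrite exprS mulrA; apply: ler_wpM2r => //.
have : b1 * t <= b1 * (1 - e ^+ 2) by apply: ler_wpM2l; rewrite /b1; lra.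
rewrite /b1; nra.
Qed.
Lemma geom_small n (d : R) : 0 <= d <= 1 -> (1 - d) ^+ n * (1 + n%:R * d) <= 1.
Proof.
move=> /andP[d0 d1]; elim: n => [|n IH]; first by rewrite expr0 mul0r addr0 mulr1.
rewrite exprS -natr1.
have h0 : 0 <= (1 - d) ^+ n by apply: exprn_ge0; lra.
have hn : 0 <= (n%:R : R) by [].
have hq : 0 <= (n%:R + 1) * (d * d) by apply: mulr_ge0; nra.
have hr : (1 - d) * (1 + (n%:R + 1) * d) <= 1 + n%:R * d by nra.
nra.
Qed.

Lemma bs_lo e p : 0 < e <= 4^-1 -> (2 <= p)%N -> 1 <= (p - 2)%:R * e ^+ 2 ->
  ln 2 - 2 * e <= @beta_star R p.
Proof.
move=> /andP[e0 e1] p2 hN; have p0 : (0 < p)%N by apply: leq_trans p2.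
have l2 := ln2_le; have l2' := ln2_ge.
have e2 : 0 < e ^+ 2 by apply: exprn_gt0.
have e2' : e ^+ 2 <= e by rewrite expr2; nra.
apply: bs_lb => //; first lra.
move=> t /andP[t0 t1].
have tp : 0 <= t ^+ p by apply: exprn_ge0.
have tp1 : t ^+ p <= 1 by apply: exprn_ile1.
case: (lerP (1 - e ^+ 2) t) => ht.
  have := Irate_near1_lo e (1 - t) ltac:(rewrite e0 /=; lra) ltac:(apply/andP; split; lra).
  rewrite (_ : 1 - (1 - t) = t); last ring.
  nra.
have := Irate_ge t ltac:(rewrite t0 t1 //).
set n := (p - 2)%N in hN.
have -> : t ^+ p = t ^+ 2 * t ^+ n by rewrite -exprD /n subnKC.
have G := geom_small n (e ^+ 2) ltac:(apply/andP; split; lra).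
have H1 : t ^+ n <= (1 - e ^+ 2) ^+ n by apply: lerXn2r; rewrite ?nnegrE; lra.
have H2 : 0 <= (1 - e ^+ 2) ^+ n by apply: exprn_ge0; lra.
have H3 : (1 - e ^+ 2) ^+ n * 2 <= 1 by nra.
have H4 : 0 <= t ^+ 2 by apply: sqr_ge0.
have H5 : 0 <= t ^+ n by apply: exprn_ge0.
move=> HI; apply: le_trans HI.
have H6 : t ^+ n <= 2^-1 by lra.
have H7 : 0 <= t ^+ 2 * t ^+ n by apply: mulr_ge0.
have H8 : t ^+ 2 * t ^+ n <= t ^+ 2 * 2^-1 by apply: ler_wpM2l.
have H9 : (ln 2 - 2 * e) * (t ^+ 2 * t ^+ n) <= t ^+ 2 * t ^+ n.
  rewrite -[leRHS]mul1r; apply: ler_wpM2r => //; lra.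
lra.
Qed.
End S.

Theorem mainTheorem20 (R : realType) :
  ((fun p : nat => @beta_star R p) @ \oo --> ln (2 : R)) /\
  (forall p : nat, (2 <= p)%N -> @beta_star R p < @beta_star R p.+1) /\
  @beta_star R 2 = 1 / 2.
Proof.
split; last by split; [exact: bs_incr | exact: bs2].
apply/cvgrPdist_le => eps eps0.
pose e : R := if eps / 2 <= 4^-1 then eps / 2 else 4^-1.
have he : 0 < e <= 4^-1 /\ e <= eps / 2.
  rewrite /e; case: ifP => h; first by split; [apply/andP; split; lra | lra].
  move/negbT: h; rewrite -ltNge => h; split; [apply/andP; split|]; lra.
case: he => he1 he2.
have e2 : 0 < e ^+ 2 by apply: exprn_gt0; case/andP: he1.
pose N := (Num.truncn ((e ^+ 2)^-1)).+3.
exists N => // p /= hp.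
have p2 : (2 <= p)%N by apply: leq_trans hp.
have p0 : (0 < p)%N by apply: leq_trans p2.
have hN : 1 <= (p - 2)%:R * e ^+ 2.
  have h1 : ((Num.truncn ((e ^+ 2)^-1)).+1 <= p - 2)%N by rewrite leq_subRL.
  have h2 := truncnS_gt ((e ^+ 2)^-1).
  have h3 : ((Num.truncn ((e ^+ 2)^-1)).+1%:R : R) <= (p - 2)%:R by rewrite ler_nat.
  rewrite -ler_pdivrMr // div1r; lra.
have A := @bs_lo R e p he1 p2 hN.
have B := @bs_le_ln2 R p p0.
rewrite ger0_norm; lra.
Qed.
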